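(* The following sets of functions $\mathbb{R}^+\to\mathbb{R}^+$ coincide: $\mathbf{Mon}(\mathbb{R}^+,d^+)=\mathbf{SI}=\mathbf{In}(\mathbf{P_U})=\mathbf{In}(\mathbf{P_{PU}})=\mathbf{Mon}(\mathbb{R}^+,\vee)$. In particular, $f$ is a monomorphism of the groupoid $(\mathbb{R}^+,d^+)$ if and only if $f$ is strictly increasing with $f(0)=0$.
   Context: $\mathbb{R}^+=[0,\infty)$. The map $d^+$ on $\mathbb{R}^+$ is defined by $d^+(p,q)=0$ if $p=q$ and $d^+(p,q)=\max\{p,q\}$ otherwise; $(\mathbb{R}^+,d^+)$ is a groupoid with identity $0$, and $(\mathbb{R}^+,\vee)$ with $x\vee y=\max\{x,y\}$ is a monoid with identity $0$. For a groupoid $(S,\ast)$ with identity $1_S$, an endomorphism is $\Phi:S\to S$ with $\Phi(x\ast y)=\Phi(x)\ast\Phi(y)$ for all $x,y$ and $\Phi(1_S)=1_S$; a monomorphism is an injective endomorphism; $\mathbf{Mon}(S,\ast)$ is the set of monomorphisms. A pseudoultrametric on a nonempty set $X$ is a symmetric $d:X\times X\to\mathbb{R}^+$ with $d(x,x)=0$ and $d(x,y)\le\max\{d(x,z),d(z,y)\}$; an ultrametric additionally satisfies $d(x,y)=0\iff x=y$. $f$ is pseudoultrametric-preserving (ultrametric-preserving) if $f\circ d$ is a pseudoultrametric (ultrametric) for every pseudoultrametric (ultrametric) $d$; $\mathbf{P_{PU}}$, $\mathbf{P_U}$ are these sets and $\mathbf{In}(\cdot)$ their injective elements. $\mathbf{SI}$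 is the set of strictly increasing $f$ with $f(0)=0$. *)

(* Defs.v *)
(* R^+ = [0,oo) is represented by the predicate (0 <= x); a function
   R^+ -> R^+ is an f : R -> R with f mapping nonnegatives to nonnegatives,
   and every property below only looks at f on nonnegative arguments. *)
From Stdlib Require Import Reals.
Open Scope R_scope.

Definition dplus (p q : R) : R :=
  if Req_EM_T p q then 0 else Rmax p q.

Definition vee (x y : R) : R := Rmax x y.

Definition endo_Rp (op : R -> R -> R) (f : R -> R) : Prop :=
  (forall x y, 0 <= x -> 0 <= y -> f (op x y) = op (f x) (f y)) /\ f 0 = 0.

Definition inj_Rp (f : R -> R) : Prop :=
  forall x y, 0 <= x -> 0 <= y -> f x = f y -> x = y.

Definition Mon_Rp (op : R -> R -> R) (f : R -> R) : Prop :=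
  endo_Rp op f /\ inj_Rp f.

Definition SI (f : R -> R) : Prop :=
  (forall x y, 0 <= x -> x < y -> f x < f y) /\ f 0 = 0.

Definition is_pseudoultrametric {X : Type} (d : X -> X -> R) : Prop :=
  (forall x y, 0 <= d x y) /\
  (forall x y, d x y = d y x) /\
  (forall x, d x x = 0) /\
  (forall x y z, d x y <= Rmax (d x z) (d z y)).

Definition is_ultrametric {X : Type} (d : X -> X -> R) : Prop :=
  is_pseudoultrametric d /\ (forall x y, d x y = 0 -> x = y).

Definition P_PU (f : R -> R) : Prop :=
  forall (X : Type) (d : X -> X -> R), inhabited X ->
    is_pseudoultrametric d -> is_pseudoultrametric (fun x y => f (d x y)).

Definition P_U (f : R -> R) : Prop :=
  forall (X : Type) (d : X -> X -> R), inhabited X ->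
    is_ultrametric d -> is_ultrametric (fun x y => f (d x y)).

Definition In_Rp (P : (R -> R) -> Prop) (f : R -> R) : Prop :=
  P f /\ inj_Rp f.

(* Main.v *)
Require Import Defs.
From Stdlib Require Import Reals Lra.
Open Scope R_scope.

Ltac rmx := unfold Rmax in *; repeat destruct Rle_dec; try lra.

Inductive tri := TA | TB | TC.

Definition dtri (x y : R) (a b : tri) : R :=
  match a, b with
  | TA, TB | TB, TA => x
  | TA, TC | TC, TA | TB, TC | TC, TB => y
  | _, _ => 0
  end.

Lemma dtri_pu x y : 0 <= x -> x < y -> is_pseudoultrametric (dtri x y).
Proof.
  intros. split; [|split; [|split]].
  - intros [] []; simpl; lra.
  - intros [] []; reflexivity.
  - intros []; reflexivity.
  - intros [] [] []; simpl; rmx.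
Qed.

Lemma dtri_u x y : 0 < x -> x < y -> is_ultrametric (dtri x y).
Proof.
  intros. split. apply dtri_pu; lra.
  intros [] []; simpl; intros; try reflexivity; lra.
Qed.

Lemma SI_mono f : SI f -> forall x y, 0 <= x -> x <= y -> f x <= f y.
Proof.
  intros [H _] x y Hx Hxy. destruct (Rle_lt_or_eq_dec _ _ Hxy).
  - left; auto.
  - subst; lra.
Qed.

Lemma SI_inj f : SI f -> inj_Rp f.
Proof.
  intros [H H0] x y Hx Hy E.
  destruct (Rtotal_order x y) as [h|[h|h]]; auto.
  - specialize (H x y Hx h); lra.
  - specialize (H y x Hy h); lra.
Qed.

Lemma SI_max f : SI f -> forall x y, 0 <= x -> 0 <= y ->
  f (Rmax x y) = Rmax (f x) (f y).
Proof.
  intros HS x y Hx Hy.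
  unfold Rmax. destruct (Rle_dec x y); destruct (Rle_dec (f x) (f y)); auto.
  - pose proof (SI_mono f HS x y Hx r). lra.
  - assert (y <= x) by lra. pose proof (SI_mono f HS y x Hy H). lra.
Qed.


Lemma from_tri f (Hf : forall x, 0 <= x -> 0 <= f x) (inj : inj_Rp f) (f0 : f 0 = 0)
  (T : forall x y, 0 < x -> x < y -> f x <= Rmax (f y) (f y)) : SI f.
Proof.
  split; auto. intros x y Hx Hxy.
  assert (f x <= f y).
  { destruct (Rle_lt_or_eq_dec _ _ Hx).
    - specialize (T x y r Hxy). rmx.
    - subst. rewrite f0. apply Hf; lra. }
  destruct (Rle_lt_or_eq_dec _ _ H); auto.
  apply inj in e; lra.
Qed.

Lemma SI_PPU f (Hf : forall x, 0 <= x -> 0 <= f x) : SI f -> P_PU f.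
Proof.
  intros HS X d _ [H1 [H2 [H3 H4]]]. split; [|split; [|split]]; simpl.
  - intros; apply Hf; auto.
  - intros; rewrite H2; auto.
  - intros; rewrite H3; apply HS.
  - intros x y z. rewrite <- SI_max; auto. apply SI_mono; auto.
Qed.

Lemma SI_PU f (Hf : forall x, 0 <= x -> 0 <= f x) : SI f -> P_U f.
Proof.
  intros HS X d i [Hp Hz]. split.
  - apply SI_PPU; auto.
  - intros x y E. apply Hz. apply (SI_inj f HS); auto. apply Hp.
    right; reflexivity. destruct HS as [_ ->]. auto.
Qed.

Theorem theorem3p9 (f : R -> R) (Hf : forall x, 0 <= x -> 0 <= f x) :
  (Mon_Rp dplus f <-> SI f) /\
  (SI f <-> In_Rp P_U f) /\
  (In_Rp P_U f <-> In_Rp P_PU f) /\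
  (In_Rp P_PU f <-> Mon_Rp vee f).
Proof.
  assert (A1 : Mon_Rp dplus f <-> SI f).
  { split.
    - intros [[E f0] inj]. split; auto. intros x y Hx Hxy.
      pose proof (E x y Hx ltac:(lra)) as E'.
      unfold dplus in E'. destruct (Req_EM_T x y); [lra|].
      destruct (Req_EM_T (f x) (f y)).
      + apply inj in e; lra.
      + assert (Rmax x y = y) by rmx. rewrite H in E'. rmx.
    - intros HS. split; [split|]; [| apply HS | apply SI_inj; auto].
      intros x y Hx Hy. unfold dplus.
      destruct (Req_EM_T x y).
      + subst. destruct (Req_EM_T (f y) (f y)); [apply HS|congruence].
      + destruct (Req_EM_T (f x) (f y)).
        * apply (SI_inj f HS) in e; auto. contradiction.
        * apply SI_max; auto. }
  assert (A2 : SI f <-> In_Rp P_U f).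
  { split.
    - intros HS; split; [apply SI_PU; auto | apply SI_inj; auto].
    - intros [P inj].
      assert (f0 : f 0 = 0).
      { destruct (P unit (fun _ _ => 0) (inhabits tt)) as [[_ [_ [h _]]] _].
        - split; [split; [|split; [|split]]|]; intros; try lra; try rmx.
          destruct x, y; reflexivity.
        - exact (h tt). }
      apply from_tri; auto.
      intros x y Hx Hxy.
      destruct (P tri (dtri x y) (inhabits TA) (dtri_u x y Hx Hxy)) as [[_ [_ [_ h]]] _].
      exact (h TA TB TC). }
  assert (A3 : SI f <-> In_Rp P_PU f).
  { split.
    - intros HS; split; [apply SI_PPU; auto | apply SI_inj; auto].
    - intros [P inj].
      assert (f0 : f 0 = 0).
      { destruct (P unit (fun _ _ => 0) (inhabits tt)) as [_ [_ [h _]]].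
        - split; [|split; [|split]]; intros; try lra; try rmx.
        - exact (h tt). }
      apply from_tri; auto.
      intros x y Hx Hxy.
      destruct (P tri (dtri x y) (inhabits TA) (dtri_pu x y ltac:(lra) Hxy)) as [_ [_ [_ h]]].
      exact (h TA TB TC). }
  assert (A4 : SI f <-> Mon_Rp vee f).
  { split.
    - intros HS. split; [split|]; [| apply HS | apply SI_inj; auto].
      intros; unfold vee; apply SI_max; auto.
    - intros [[E f0] inj]. split; auto. intros x y Hx Hxy.
      pose proof (E x y Hx ltac:(lra)) as E'. unfold vee in E'.
      assert (Rmax x y = y) by rmx. rewrite H in E'.
      assert (f x <= f y) by rmx.
      destruct (Rle_lt_or_eq_dec _ _ H0); auto.
      apply inj in e; lra. }
  split; [exact A1|]. split; [exact A2|]. split.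
  - rewrite <- A2, <- A3; tauto.
  - rewrite <- A3, <- A4; tauto.
Qed.
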